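(* Consider a hierarchical tensor factorization with mode tree $\mathcal T$ whose weight matrices $(W^{(\nu)}(t))_{\nu\in\mathcal T}$ evolve under gradient flow on $\phi_H$ for $t\ge0$. Then for all $\nu\in\mathrm{int}(\mathcal T)$, $r\in[R_\nu]$ and $w,w'\in\mathrm{LC}(\nu,r)$: $$\|w(t)\|^2-\|w'(t)\|^2=\|w(0)\|^2-\|w'(0)\|^2\quad\text{for all } t\ge0.$$
   Context: Fix $N\in\mathbb N$, $D_1,\dots,D_N\in\mathbb N$; $[K]:=\{1,\dots,K\}$. Norms are Frobenius norms, $\otimes$ the tensor product. A mode tree $\mathcal T$ over $[N]$ is a rooted tree whose nodes are labeled by subsets of $[N]$, with exactly $N$ leaves labeled $\{1\},\dots,\{N\}$, and where each interior node's label is the union of its children's labels; nodes are identified with labels, the root is $[N]$, $\mathrm{int}(\mathcal T)$ denotes interior nodes, $Pa(\nu)$ the parent, $C(\nu)$ the children (in a fixed order). A hierarchical tensor factorization is given by $R_\nu\in\mathbb N$ ($\nu\in\mathrm{int}(\mathcal T)$), with $R_{Pa([N])}:=1$, $R_{\{n\}}:=D_n$, and weight matrices $W^{(\nu)}\in\mathbb R^{R_\nu\times R_{Pa(\nu)}}$, $\nu\in\mathcal T$. Intermediate tensors: $\mathcal W^{(\{n\},r)}:=W^{(\{n\})}_{:,r}$; for $\nu\in\mathrm{int}(\mathcal T)\setminus\{[N]\}$ (leaves to root) and $r\in[R_{Pa(\nu)}]$, $\mathcal W^{(\nu,r)}:=\pi_\nu\big(\sum_{r'=1}^{R_\nu}W^{(\nu)}_{r',r}\bigotimes_{\nu_c\in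 C(\nu)}\mathcal W^{(\nu_c,r')}\big)$; end tensor $\mathcal W_H:=\pi_{[N]}\big(\sum_{r'=1}^{R_{[N]}}W^{([N])}_{r',1}\bigotimes_{\nu_c\in C([N])}\mathcal W^{(\nu_c,r')}\big)\in\mathbb R^{D_1\times\cdots\times D_N}$, where $\pi_\nu$ permutes modes (ordered by children, each child's elements ascending) into ascending order of the elements of $\nu$. $\mathrm{LC}(\nu,r)$ ($\nu\in\mathrm{int}(\mathcal T)$, $r\in[R_\nu]$) is the collection of vectors $W^{(\nu)}_{r,:}$ and $W^{(\nu_c)}_{:,r}$, $\nu_c\in C(\nu)$. Let $\mathcal L_H:\mathbb R^{D_1\times\cdots\times D_N}\to\mathbb R_{\ge0}$ be differentiable and locally smooth, $\phi_H((W^{(\nu)})_\nu):=\mathcal L_H(\mathcal W_H)$; gradient flow: $\frac{d}{dt}W^{(\nu)}(t)=-\frac{\partial}{\partial W^{(\nu)}}\phi_H((W^{(\nu')}(t))_{\nu'})$ for all $\nu\in\mathcal T$, $t\ge0$. *)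

(* Defs.v *)
From HB Require Import structures.
From mathcomp Require Import all_boot all_order all_algebra.
From mathcomp Require Import all_classical all_reals all_analysis.
Unset Printing Implicit Defensive.
Import Order.TTheory GRing.Theory Num.Theory.
Import numFieldNormedType.Exports.
Local Open Scope ring_scope.

(* Mode trees.  Modes are 'I_N (mode n+1 of the paper is n : 'I_N).  Since  *)
(* nodes are identified with their labels, a mode tree is encoded by its    *)
(* set of labels T : {set {set 'I_N}}; the tree structure (parent/children) *)
(* is the Hasse diagram of inclusion.  A family of labels comes from a mode *)
(* tree iff it contains [N] and every singleton, no empty label, and is     *)
(* laminar (two labels are nested or disjoint).                             *)
Definition mode_tree (N : nat) (T : {set {set 'I_N}}) : Prop :=
  [/\ [set: 'I_N] \in T,
      forall n : 'I_N, [set n] \in T,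
      (@finset.set0 _) \notin T &
      forall A B, A \in T -> B \in T ->
        [|| A \subset B, B \subset A | [disjoint A & B]]].
Arguments mode_tree {N}.

Definition is_child (N : nat) (T : {set {set 'I_N}}) (c nu : {set 'I_N}) : bool :=
  [&& c \in T, nu \in T, c \proper nu &
      [forall k in T, ~~ ((c \proper k) && (k \proper nu))]].
Arguments is_child {N}.

Definition children (N : nat) (T : {set {set 'I_N}}) (nu : {set 'I_N}) :=
  [set c | is_child T c nu].
Arguments children {N}.

Definition parent (N : nat) (T : {set {set 'I_N}}) (nu : {set 'I_N}) :=
  [pick mu | is_child T nu mu].
Arguments parent {N}.

Definition leaf_of (N : nat) (nu : {set 'I_N}) : option 'I_N :=
  [pick n | nu == [set n]].
Arguments leaf_of {N}.

Definition interior_node (N : nat) (T : {set {set 'I_N}}) (nu : {set 'I_N}) : bool :=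
  (nu \in T) && (leaf_of nu == None).
Arguments interior_node {N}.

Definition rk (N : nat) (D : 'I_N -> nat) (Rk : {set 'I_N} -> nat)
  (nu : {set 'I_N}) : nat :=
  if leaf_of nu is Some n then D n else Rk nu.
Arguments rk {N}.

Definition rkPa (N : nat) (T : {set {set 'I_N}}) (D : 'I_N -> nat)
  (Rk : {set 'I_N} -> nat) (nu : {set 'I_N}) : nat :=
  if nu == [set: 'I_N] then 1%N
  else if parent T nu is Some mu then rk D Rk mu else 1%N.
Arguments rkPa {N}.

(* Tensors in R^{D_1 x ... x D_N}: functions on multi-indices.             *)
Definition idx (N : nat) (D : 'I_N -> nat) := {dffun forall n : 'I_N, 'I_(D n)}.
Arguments idx {N}.

(* Weights: W nu i j is the (i,j) entry (0-based) of W^{(nu)}, meaningful   *)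
(* for i < R_nu, j < R_{Pa(nu)}; other entries are never used.             *)
Definition weights (R : realType) (N : nat) := {set 'I_N} -> nat -> nat -> R.

(* Intermediate tensor W^{(nu,r)}, as a function of the full multi-index   *)
(* (it only depends on the coordinates in nu).  The permutation pi_nu of   *)
(* the paper is built in: entries are addressed by mode, not by position.  *)
(* Recursion from leaves to root, with fuel k (k = N suffices).            *)
Fixpoint itensor (R : realType) (N : nat) (T : {set {set 'I_N}}) (D : 'I_N -> nat)
  (Rk : {set 'I_N} -> nat) (W : weights R N) (k : nat)
  (nu : {set 'I_N}) (r : nat) (i : idx D) : R :=
  if leaf_of nu is Some n then W nu (i n : nat) r
  else if k is k'.+1 then
    \sum_(r' < rk D Rk nu)
       W nu r' r * \prod_(c in children T nu) itensor R N T D Rk W k' c r' i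
  else 0.
Arguments itensor {R N}.

(* End tensor W_H (the column index of W^{([N])} is 1, i.e. 0 here). *)
Definition end_tensor (R : realType) (N : nat) (T : {set {set 'I_N}})
  (D : 'I_N -> nat) (Rk : {set 'I_N} -> nat) (W : weights R N) : idx D -> R :=
  itensor T D Rk W N [set: 'I_N] 0%N.
Arguments end_tensor {R N}.

Definition phiH (R : realType) (N : nat) (T : {set {set 'I_N}})
  (D : 'I_N -> nat) (Rk : {set 'I_N} -> nat) (L : (idx D -> R) -> R)
  (W : weights R N) : R :=
  L (end_tensor T D Rk W).
Arguments phiH {R N}.

Definition fnorm (R : realType) (I : finType) (X : I -> R) : R :=
  Num.sqrt (\sum_(i : I) X i ^+ 2).
Arguments fnorm {R I}.

Definition is_gradient (R : realType) (I : finType) (L : (I -> R) -> R)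
  (G : (I -> R) -> I -> R) : Prop :=
  forall X (e : R), 0 < e -> exists2 d : R, 0 < d &
    forall H : I -> R, fnorm H < d ->
      `| L (fun i => X i + H i) - L X - \sum_(i : I) G X i * H i | <= e * fnorm H.
Arguments is_gradient {R I}.

Definition differentiableT (R : realType) (I : finType) (L : (I -> R) -> R) :=
  exists G, is_gradient L G.
Arguments differentiableT {R I}.

Definition locally_smooth (R : realType) (I : finType) (L : (I -> R) -> R) :=
  exists G, is_gradient L G /\
    forall X : I -> R, exists2 d : R, 0 < d & exists K : R,
      forall Y Z : I -> R,
        fnorm (fun i => Y i - X i) < d -> fnorm (fun i => Z i - X i) < d ->
        fnorm (fun i => G Y i - G Z i) <= K * fnorm (fun i => Y i - Z i).
Arguments locally_smooth {R I}.

Definition upd (R : realType) (N : nat) (W : weights R N) (nu : {set 'I_N})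
  (i j : nat) (s : R) : weights R N :=
  fun mu a b => if [&& mu == nu, a == i & b == j] then s else W mu a b.
Arguments upd {R N}.

Definition dphi (R : realType) (N : nat) (T : {set {set 'I_N}})
  (D : 'I_N -> nat) (Rk : {set 'I_N} -> nat) (L : (idx D -> R) -> R)
  (W : weights R N) (nu : {set 'I_N}) (i j : nat) : R :=
  derive1 (fun s => phiH T D Rk L (upd W nu i j s)) (W nu i j).
Arguments dphi {R N}.

Local Open Scope classical_set_scope.
Definition deriv_nonneg (R : realType) (f : R -> R) (t l : R) : Prop :=
  (fun s => (f s - f t) / (s - t)) @ within (fun s : R => 0 <= s) t^' --> l.
Arguments deriv_nonneg {R}.

Local Close Scope classical_set_scope.
Definition gradient_flow (R : realType) (N : nat) (T : {set {set 'I_N}})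
  (D : 'I_N -> nat) (Rk : {set 'I_N} -> nat) (L : (idx D -> R) -> R)
  (Wt : R -> weights R N) : Prop :=
  forall t : R, 0 <= t -> forall nu, nu \in T ->
  forall i j : nat, (i < rk D Rk nu)%N -> (j < rkPa T D Rk nu)%N ->
    deriv_nonneg (fun s => Wt s nu i j) t (- dphi T D Rk L (Wt t) nu i j).
Arguments gradient_flow {R N}.

(* LC(nu, r): None = the row W^{(nu)}_{r,:}; Some c = the column           *)
(* W^{(c)}_{:,r} of a child c of nu.                                       *)
Definition in_LC (N : nat) (T : {set {set 'I_N}}) (nu : {set 'I_N})
  (w : option {set 'I_N}) : bool :=
  if w is Some c then c \in children T nu else true.
Arguments in_LC {N}.

Definition LC_sqnorm (R : realType) (N : nat) (T : {set {set 'I_N}})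
  (D : 'I_N -> nat) (Rk : {set 'I_N} -> nat) (W : weights R N)
  (nu : {set 'I_N}) (r : nat) (w : option {set 'I_N}) : R :=
  if w is Some c then \sum_(a < rk D Rk c) W c a r ^+ 2
  else \sum_(b < rkPa T D Rk nu) W nu r b ^+ 2.
Arguments LC_sqnorm {R N}.

(* Main.v *)
Require Import Defs.
From HB Require Import structures.
From mathcomp Require Import all_boot all_order all_algebra.
From mathcomp Require Import all_classical all_reals all_analysis.
From mathcomp Require Import fintype finset.
From mathcomp Require Import ring lra.
Import Order.TTheory GRing.Theory Num.Theory.
Import numFieldNormedType.Exports.
Local Open Scope ring_scope.

Section Tree.
Context {N : nat} {T : {set {set 'I_N}}}.
Hypothesis hT : mode_tree T.

Lemma T_nonempty {x} : x \in T -> exists n, n \in x.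
Proof.
case: hT => _ _ h0 _ xT.
case: (set_0Vmem x) => [x0|[n nx]]; last by exists n.
by move: h0; rewrite -x0 xT.
Qed.

Lemma childP {c p} : c \in children T p -> [/\ c \in T, p \in T, c \proper p &
      [forall k in T, ~~ ((c \proper k) && (k \proper p))]].
Proof. by rewrite inE => /and4P. Qed.

Lemma parent_uniq {c p1 p2} : c \in children T p1 -> c \in children T p2 -> p1 = p2.
Proof.
move=> /childP [cT p1T cp1 /forall_inP h1] /childP [_ p2T cp2 /forall_inP h2].
have [n nc] := T_nonempty cT.
case: hT => _ _ _ lam.
case/or3P: (lam _ _ p1T p2T) => [s12|s21|dis].
- apply/eqP; apply/negPn/negP => ne.
  have := h2 _ p1T; rewrite cp1 /= properEneq ne s12 //.
- apply/eqP; apply/negPn/negP => ne.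
  have := h1 _ p2T; rewrite cp2 /= properEneq eq_sym ne s21 //.
- have n1 : n \in p1 by by apply: (subsetP (proper_sub cp1)).
  have n2 : n \in p2 by by apply: (subsetP (proper_sub cp2)).
  by rewrite (disjointFr dis n1) in n2.
Qed.

Lemma children_disj {p c1 c2} : c1 \in children T p -> c2 \in children T p ->
  c1 != c2 -> [disjoint c1 & c2].
Proof.
move=> /childP [c1T pT cp1 /forall_inP h1] /childP [c2T _ cp2 /forall_inP h2] ne.
case: hT => _ _ _ lam.
case/or3P: (lam _ _ c1T c2T) => [s12|s21|//].
- by have := h1 _ c2T; rewrite cp2 properEneq ne s12.
- by have := h2 _ c1T; rewrite cp1 properEneq eq_sym ne s21.
Qed.

Lemma rkPa_child (D : 'I_N -> nat) Rk {c p} : c \in children T p ->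
  rkPa T D Rk c = rk D Rk p.
Proof.
move=> cp; have /childP [_ _ cpp _] := cp.
rewrite /rkPa; case: eqP => [cT|_].
  by move: cpp; rewrite cT => /properP [_ [x _]]; rewrite inE.
rewrite /parent; case: pickP => [mu hmu|/(_ p)].
  by rewrite (parent_uniq (c:=c) (p1:=mu) (p2:=p)) // inE.
by move: cp; rewrite inE => ->.
Qed.

End Tree.

Section Aff.
Context {R : realType}.
Definition AFF (f : (nat -> R) -> R) :=
  forall x y a, f (fun b => x b + a * y b) - f x = a * (f y - f (fun _ => 0)).

Lemma AFF_ext f g : (forall x, f x = g x) -> AFF g -> AFF f.
Proof. by move=> e hg x y a; rewrite !e hg. Qed.

Lemma AFF_const K : AFF (fun _ => K).
Proof. by move=> x y a; rewrite !subrr mulr0. Qed.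

Lemma AFF_coord b : AFF (fun x => x b).
Proof. by move=> x y a; rewrite subr0 [x b + _]addrC addrK. Qed.

Lemma AFF_mulr f K : AFF f -> AFF (fun x => f x * K).
Proof. by move=> hf x y a; rewrite -mulrBl hf -mulrA mulrBl. Qed.

Lemma AFF_mull f K : AFF f -> AFF (fun x => K * f x).
Proof. by move=> hf x y a; rewrite -mulrBr hf mulrCA mulrBr. Qed.

Lemma AFF_sum n (F : 'I_n -> (nat -> R) -> R) :
  (forall j, AFF (F j)) -> AFF (fun x => \sum_(j < n) F j x).
Proof.
move=> hF x y a; rewrite -sumrB.
under eq_bigr do rewrite hF.
by rewrite -mulr_sumr sumrB.
Qed.

Lemma AFF_trunc f (w : nat -> R) M : AFF f ->
  f (fun b => if (b < M)%N then w b else 0) - f (fun _ => 0) =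
  \sum_(b < M) w b * (f (fun b' => (b' == b)%:R) - f (fun _ => 0)).
Proof.
move=> hf; elim: M => [|M IH].
  rewrite big_ord0; have -> : (fun b : nat => if (b < 0)%N then w b else 0) = (fun _ => 0).
    by apply: funext => b.
  by rewrite subrr.
rewrite big_ord_recr /= -IH.
have -> : (fun b => if (b < M.+1)%N then w b else 0) =
  (fun b => (fun b => if (b < M)%N then w b else 0) b + w M * (b == M)%:R).
  apply: funext => b; rewrite ltnS leq_eqVlt.
  case: (ltngtP b M) => [bM|bM|->] /=; rewrite ?eqxx /= ?mulr1 ?add0r ?ltnn //.
  - by rewrite mulr0 addr0.
  - by rewrite mulr0.
have := hf (fun b => if (b < M)%N then w b else 0) (fun b' => (b' == M)%:R) (w M).
move=> <-; lra.
Qed.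
End Aff.

Section Itensor.
Variables (R : realType) (N : nat) (T : {set {set 'I_N}}) (D : 'I_N -> nat)
  (Rk : {set 'I_N} -> nat).
Hypothesis hT : mode_tree T.

Lemma child_proper {c p} : c \in children T p -> c \proper p.
Proof. by case/childP. Qed.

Lemma IND_gen (W W' : weights R N) (m : {set 'I_N}) :
  (forall mu a b, mu != m -> W' mu a b = W mu a b) ->
  forall k (mu : {set 'I_N}) (q : nat) (i : idx D), ~~ (m \subset mu) ->
  itensor T D Rk W' k mu q i = itensor T D Rk W k mu q i.
Proof.
move=> hW; elim=> [|k IH] mu q i hm /=.
  case: (leaf_of mu) => [n|//]; rewrite hW //.
  by apply: contra hm => /eqP ->.
case: (leaf_of mu) => [n|].
  by rewrite hW //; apply: contra hm => /eqP ->.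
apply: eq_bigr => r' _; rewrite hW; last by apply: contra hm => /eqP ->.
congr (_ * _); apply: eq_bigr => c hc; apply: IH.
apply: contra hm => hmc; apply: subset_trans hmc _.
by have := child_proper hc; rewrite properE => /andP [-> _].
Qed.

Section AffGen.
Variables (W0 : weights R N) (Wx : (nat -> R) -> weights R N) (m : {set 'I_N}).
Hypothesis mT : m \in T.
Hypothesis h1 : forall x mu a b, mu != m -> Wx x mu a b = W0 mu a b.
Hypothesis h2 : forall a b, AFF (fun x => Wx x m a b).

Lemma Wx_same x x' mu a b : mu != m -> Wx x mu a b = Wx x' mu a b.
Proof. by move=> hm; rewrite !h1. Qed.

Lemma AFF_gen k (mu : {set 'I_N}) (q : nat) (i : idx D) : AFF (fun x => itensor T D Rk (Wx x) k mu q i).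
Proof.
elim: k mu q i => [|k IH] mu q i /=.
  case: (leaf_of mu) => [n|]; last exact: AFF_const.
  case: (eqVneq mu m) => [->|hm]; first exact: h2.
  by apply: (@AFF_ext _ _ (fun _ => W0 mu (i n) q)); [move=> x; rewrite h1 | exact: AFF_const].
case: (leaf_of mu) => [n|].
  case: (eqVneq mu m) => [->|hm]; first exact: h2.
  by apply: (@AFF_ext _ _ (fun _ => W0 mu (i n) q)); [move=> x; rewrite h1 | exact: AFF_const].
apply: AFF_sum => r'.
case: (eqVneq mu m) => [emu|hm].
  apply: (@AFF_ext _ _ (fun x => Wx x mu r' q *
     \prod_(c in children T mu) itensor T D Rk (Wx (fun _ => 0)) k c r' i)).
    move=> x; congr (_ * _); apply: eq_bigr => c hc.
    apply: (@IND_gen (Wx (fun _ => 0)) (Wx x) m) => [mu' a b hmu|]; first exact: Wx_same.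
    have := child_proper hc; rewrite emu properE => /andP [_ //].
  by apply: AFF_mulr; have := h2 r' q; rewrite -emu.
case: (pickP (fun c => (c \in children T mu) && (m \subset c))) => [cs /andP [hcs hmcs]|none].
  apply: (@AFF_ext _ _ (fun x => W0 mu r' q * (itensor T D Rk (Wx x) k cs r' i *
     \prod_(c in children T mu | c != cs) itensor T D Rk (Wx (fun _ => 0)) k c r' i))).
    move=> x; rewrite h1 //; congr (_ * _); rewrite (bigD1 cs) //=; congr (_ * _).
    apply: eq_bigr => c /andP [hc ne].
    apply: (@IND_gen (Wx (fun _ => 0)) (Wx x) m) => [mu' a b hmu|]; first exact: Wx_same.
    apply/negP => hmc.
    have [n nm] := T_nonempty hT mT.
    have dis := children_disj hT hc hcs ne.
    have n1 : n \in c by apply: (subsetP hmc).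
    have n2 : n \in cs by apply: (subsetP hmcs).
    by rewrite (disjointFr dis n1) in n2.
  by apply: AFF_mull; apply: AFF_mulr.
apply: (@AFF_ext _ _ (fun x => W0 mu r' q *
     \prod_(c in children T mu) itensor T D Rk (Wx (fun _ => 0)) k c r' i)); last exact: AFF_const.
move=> x; rewrite h1 //; congr (_ * _); apply: eq_bigr => c hc.
apply: (@IND_gen (Wx (fun _ => 0)) (Wx x) m) => [mu' a b hmu|]; first exact: Wx_same.
by have := none c; rewrite hc /= => ->.
Qed.
End AffGen.

Section RowCol.
Variables (W : weights R N) (nu c : {set 'I_N}) (r : nat).
Hypothesis nuT : nu \in T.
Hypothesis nu_int : leaf_of nu = None.
Hypothesis hc : c \in children T nu.

Definition setrow (x : nat -> R) : weights R N :=
  fun mu a b => if (mu == nu) && (a == r) then x b else W mu a b.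
Definition setcol (y : nat -> R) : weights R N :=
  fun mu a b => if (mu == c) && (b == r) then y a else W mu a b.

Lemma RANGE_col y y' : (forall a, (a < rk D Rk c)%N -> y a = y' a) ->
  forall k (mu : {set 'I_N}) (q : nat) (i : idx D),
  itensor T D Rk (setcol y) k mu q i = itensor T D Rk (setcol y') k mu q i.
Proof.
move=> hy; elim=> [|k IH] mu q i /=.
  case El: (leaf_of mu) => [n|//]; rewrite /setcol; case: ifP => // /andP [/eqP muc _].
  by apply: hy; rewrite /rk -muc El.
case El: (leaf_of mu) => [n|].
  rewrite /setcol; case: ifP => // /andP [/eqP muc _].
  by apply: hy; rewrite /rk -muc El.
apply: eq_bigr => r' _; congr (_ * _); last by apply: eq_bigr => c' _; apply: IH.
rewrite /setcol; case: ifP => // /andP [/eqP muc _].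
by apply: hy; rewrite -muc.
Qed.

Lemma RANGE_row x x' : (forall b, (b < rkPa T D Rk nu)%N -> x b = x' b) ->
  forall k (mu : {set 'I_N}) (q : nat) (i : idx D),
  (mu = nu -> (q < rkPa T D Rk nu)%N) ->
  itensor T D Rk (setrow x) k mu q i = itensor T D Rk (setrow x') k mu q i.
Proof.
move=> hx; elim=> [|k IH] mu q i hq /=.
  case El: (leaf_of mu) => [n|//]; rewrite /setrow; case: ifP => // /andP [/eqP munu _].
  exact/hx/hq.
case El: (leaf_of mu) => [n|].
  rewrite /setrow; case: ifP => // /andP [/eqP munu _].
  exact/hx/hq.
apply: eq_bigr => r' _; congr (_ * _).
  rewrite /setrow; case: ifP => // /andP [/eqP munu _].
  exact/hx/hq.
apply: eq_bigr => c' hc'; apply: IH => ec'.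
by rewrite -ec' (rkPa_child hT D Rk (c:=c') (p:=mu)).
Qed.

Lemma setcol0_c k i : itensor T D Rk (setcol (fun _ => 0)) k c r i = 0.
Proof.
case: k => [|k] /=.
  by case: (leaf_of c) => [n|//]; rewrite /setcol !eqxx.
case: (leaf_of c) => [n|]; first by rewrite /setcol !eqxx.
by apply: big1 => r' _; rewrite /setcol !eqxx mul0r.
Qed.

Lemma c_neq_nu : c != nu.
Proof.
by apply/eqP => e; have := child_proper hc; rewrite e properE subxx.
Qed.

Lemma ZERO k (mu : {set 'I_N}) (q : nat) (i : idx D) : (mu != c) || (q != r) ->
  itensor T D Rk (setrow (fun _ => 0)) k mu q i =
  itensor T D Rk (setcol (fun _ => 0)) k mu q i.
Proof.
elim: k mu q i => [|k IH] mu q i hmq /=.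
  case El: (leaf_of mu) => [n|//].
  have hmnu : (mu == nu) = false.
    by apply/negP => /eqP e; rewrite e nu_int in El.
  rewrite /setrow /setcol hmnu /=.
  by move: hmq; case: (mu == c); case: (q == r).
case El: (leaf_of mu) => [n|].
  have hmnu : (mu == nu) = false.
    by apply/negP => /eqP e; rewrite e nu_int in El.
  rewrite /setrow /setcol hmnu /=.
  by move: hmq; case: (mu == c); case: (q == r).
case: (eqVneq mu nu) => [emu|hmnu].
  apply: eq_bigr => r' _.
  have hmc : (mu == c) = false by rewrite emu eq_sym (negbTE c_neq_nu).
  case: (eqVneq (r' : nat) r) => [er|ner].
    have hmn : (mu == nu) = true by apply/eqP.
    rewrite /setrow /setcol hmn er eqxx hmc /= mul0r.
    rewrite (bigD1 c) /=; last by rewrite emu.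
    by rewrite setcol0_c mul0r mulr0.
  have hmn : (mu == nu) = true by apply/eqP.
  rewrite /setrow /setcol hmn (negbTE ner) hmc /=.
  congr (_ * _); apply: eq_bigr => c' hc'; apply: IH.
  by rewrite ner orbT.
apply: eq_bigr => r' _.
rewrite /setrow /setcol (negbTE hmnu) /=.
have -> : (mu == c) && (q == r) = false by move: hmq; case: (mu == c); case: (q == r).
congr (_ * _); apply: eq_bigr => c' hc'; apply: IH.
apply/orP; left; apply/eqP => ec.
by move: hmnu; rewrite (parent_uniq hT (c:=c) (p1:=mu) (p2:=nu)) ?eqxx // -ec.
Qed.

End RowCol.

End Itensor.

Section Grad.
Context {R : realType} {I : finType}.

Lemma fnorm_scale (h : R) (B : I -> R) : fnorm (fun i => h * B i) = `|h| * fnorm B.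
Proof.
rewrite /fnorm -sqrtr_sqr -sqrtrM ?sqr_ge0 //; congr Num.sqrt.
by rewrite mulr_sumr; apply: eq_bigr => i _; rewrite exprMn.
Qed.

Lemma fnorm_ge0 (B : I -> R) : 0 <= fnorm B.
Proof. exact: sqrtr_ge0. Qed.

Lemma GRADLIN (L : (I -> R) -> R) G : is_gradient L G ->
  forall (A B : I -> R) s0,
  derive1 (fun s => L (fun i => A i + s * B i)) s0 =
  \sum_i G (fun i => A i + s0 * B i) i * B i.
Proof.
move=> hG A B s0.
set X := (fun i => A i + s0 * B i).
set l := \sum_i G X i * B i.
rewrite /derive1; apply: cvg_lim => //.
apply/cvgrPdist_le => e e0.
have fB0 := fnorm_ge0 B.
have e'0 : 0 < e / (fnorm B + 1) by apply: divr_gt0 => //; lra.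
have [d d0 Hd] := hG X _ e'0.
have d'0 : 0 < d / (fnorm B + 1) by apply: divr_gt0 => //; lra.
near=> h.
have h0 : h != 0 by near: h; exact: nbhs_dnbhs_neq.
have hd : `|h| < d / (fnorm B + 1).
  near: h; apply: nbhs_dnbhs.
  apply/nbhs_ballP; exists (d / (fnorm B + 1)) => // y /=.
  by rewrite /ball /= sub0r normrN.
have eqX : (fun i => A i + (h + s0) * B i) = (fun i => X i + h * B i).
  by apply: funext => i; rewrite /X; ring.
rewrite eqX.
have hn : fnorm (fun i => h * B i) < d.
  rewrite fnorm_scale.
  have : `|h| * (fnorm B + 1) < d by rewrite -ltr_pdivlMr //; lra.
  have := normr_ge0 h; nra.
have H1 := Hd _ hn.
have eS : \sum_i G X i * (h * B i) = h * l.
  by rewrite /l mulr_sumr; apply: eq_bigr => i _; ring.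
rewrite eS fnorm_scale in H1.
set Dl := L (fun i => X i + h * B i) - L X.
have -> : l - h^-1 *: Dl = - (h^-1 * (L (fun i => X i + h * B i) - L X - h * l)).
  rewrite /Dl -[h^-1 *: _]/(h^-1 * _); field.
  by [].
rewrite normrN normrM normfV mulrC ler_pdivrMr ?normr_gt0 //.
apply: (le_trans H1).
have ee : e / (fnorm B + 1) * (fnorm B + 1) = e.
  by rewrite divfK //; apply/lt0r_neq0; lra.
move: ee e'0; set e' := e / (fnorm B + 1) => ee e'0.
have := normr_ge0 h; nra.
Unshelve. all: by end_near.
Qed.
End Grad.

Section DQ.
Context {R : realType}.
Local Open Scope classical_set_scope.
Implicit Types (f g : R -> R) (t l : R).

Lemma dq_sub_t t : (fun s : R => s - t) @ within (fun s : R => 0 <= s) t^' --> (0 : R).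
Proof.
rewrite -(subrr t); apply: cvgB; last exact: cvg_cst.
apply: cvg_within_filter; apply: cvg_within_filter; exact: cvg_id.
Qed.

Lemma dq_cont f t l : deriv_nonneg f t l ->
  f @ within (fun s : R => 0 <= s) t^' --> f t.
Proof.
move=> hf; rewrite /deriv_nonneg.
have H : (fun s => f t + (f s - f t) / (s - t) * (s - t)) @
   within (fun s : R => 0 <= s) t^' --> f t + l * 0.
  apply: cvgD; first exact: cvg_cst.
  apply: cvgM => //; exact: dq_sub_t.
rewrite mulr0 addr0 in H.
apply: cvg_trans H; apply: near_eq_cvg.
near=> s.
have hs : s != t.
  near: s; apply: cvg_within; exact: (@nbhs_dnbhs_neq R t).
by rewrite divfK ?subr_eq0 // addrC subrK.
Unshelve. all: by end_near.
Qed.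

Lemma dq_sq f t l : deriv_nonneg f t l ->
  deriv_nonneg (fun s => f s ^+ 2) t ((f t + f t) * l).
Proof.
move=> hf; rewrite /deriv_nonneg.
have -> : (fun s => (f s ^+ 2 - f t ^+ 2) / (s - t)) =
  (fun s => (f s + f t) * ((f s - f t) / (s - t))).
  by apply: funext => s; rewrite mulrA subr_sqr [(f s - f t) * _]mulrC.
apply: cvgM; last exact: hf.
apply: cvgD; [exact: (@dq_cont f t l hf) | exact: cvg_cst].
Qed.

Lemma dq_sub f g t l1 l2 : deriv_nonneg f t l1 -> deriv_nonneg g t l2 ->
  deriv_nonneg (fun s => f s - g s) t (l1 - l2).
Proof.
move=> hf hg; rewrite /deriv_nonneg.
have -> : (fun s => (f s - g s - (f t - g t)) / (s - t)) =
  (fun s => (f s - f t) / (s - t) - (g s - g t) / (s - t)).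
  by apply: funext => s; rewrite -mulrBl; congr (_ * _); ring.
exact: cvgB.
Qed.

Lemma dq_sum n (F : 'I_n -> R -> R) (l : 'I_n -> R) t :
  (forall j, deriv_nonneg (F j) t (l j)) ->
  deriv_nonneg (fun s => \sum_(j < n) F j s) t (\sum_(j < n) l j).
Proof.
move=> hF; rewrite /deriv_nonneg.
have -> : (fun s => (\sum_(j < n) F j s - \sum_(j < n) F j t) / (s - t)) =
  (fun s => \sum_(j < n) ((F j s - F j t) / (s - t))).
  by apply: funext => s; rewrite -sumrB mulr_suml.
elim: n F l hF => [|n IH] F l hF.
  have -> : (fun s => \sum_(j < 0) ((F j s - F j t) / (s - t))) = (fun _ => 0).
    by apply: funext => s; rewrite big_ord0.
  by rewrite big_ord0; exact: cvg_cst.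
have -> : (fun s => \sum_(j < n.+1) ((F j s - F j t) / (s - t))) =
   (fun s => \sum_(j < n) ((F (widen_ord (leqnSn n) j) s - F (widen_ord (leqnSn n) j) t) / (s - t))
      + (F ord_max s - F ord_max t) / (s - t)).
  by apply: funext => s; rewrite big_ord_recr.
rewrite big_ord_recr; apply: cvgD; last exact: hF.
exact: (IH (fun j => F (widen_ord (leqnSn n) j))).
Qed.

Lemma dq_DZ g t : deriv_nonneg g t 0 -> forall e, 0 < e ->
  exists2 d, 0 < d & forall s, 0 <= s -> `|s - t| < d -> `|g s - g t| <= e * `|s - t|.
Proof.
move=> hg e e0.
move/cvgrPdist_le : hg => /(_ e e0).
move=> /nbhs_ballP [d /= d0 hd]; exists d => // s s0 sd.
case: (eqVneq s t) => [->|st]; first by rewrite !subrr normr0 mulr0.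
have := hd s _ st s0.
have bs : ball t d s by rewrite /ball /= distrC.
move=> /(_ bs); rewrite sub0r normrN normrM normfV ler_pdivrMr ?normr_gt0 ?subr_eq0 //.
Qed.
Lemma DZ_const (g : R -> R) :
  (forall t, 0 <= t -> forall e, 0 < e -> exists2 d, 0 < d &
     forall s, 0 <= s -> `|s - t| < d -> `|g s - g t| <= e * `|s - t|) ->
  forall T0, 0 <= T0 -> g T0 = g 0.
Proof.
move=> hD T0 T00.
suff H : forall e, 0 < e -> `|g T0 - g 0| <= e * T0.
  apply/eqP; rewrite -subr_eq0 -normr_eq0; apply/eqP.
  apply/le_anti/andP; split; last exact: normr_ge0.
  rewrite leNgt; apply/negP => Dp.
  set Dv := `|g T0 - g 0| in Dp H.
  have e0 : 0 < Dv / (2 * (T0 + 1)) by apply: divr_gt0 => //; lra.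
  have := H _ e0.
  have ee : Dv / (2 * (T0 + 1)) * (2 * (T0 + 1)) = Dv.
    by rewrite divfK //; apply/lt0r_neq0; lra.
  move: ee e0; set e' := Dv / (2 * (T0 + 1)) => ee e0.
  nra.
move=> e e0.
set A := [set x : R | (0 <= x <= T0) /\ forall y, 0 <= y <= x -> `|g y - g 0| <= e * y].
have A0 : A 0.
  split; first by rewrite lexx T00.
  move=> y /andP [y0 y0']; have -> : y = 0 by apply/le_anti; rewrite y0 y0'.
  by rewrite subrr normr0 mulr0.
have ubA : ubound A T0 by move=> x [/andP [_ ->]].
have hs : has_sup A by split; [exists 0 | exists T0].
set m := sup A.
have m0 : 0 <= m by apply: (sup_upper_bound hs); exact: A0.
have mT : m <= T0 by apply: ge_sup => //; exists 0.
have Am : forall y, 0 <= y <= m -> `|g y - g 0| <= e * y.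
  move=> y /andP [y0 ym].
  case: (ltP y m) => [yltm|mley].
    have my0 : 0 < m - y by rewrite subr_gt0.
    have [x' [_ Ax'] hx'] := sup_adherent my0 hs.
    apply: Ax'; rewrite y0 /=; rewrite -/m in hx'; lra.
  have ey : y = m by apply/le_anti; rewrite ym mley.
  rewrite ey.
  have [d d0 hd] := hD m m0 e e0.
  have [x Ax hx] := sup_adherent d0 hs.
  have xm : x <= m by apply: (sup_upper_bound hs); exact: Ax.
  case: Ax => /andP [x0 _] Ax.
  have h1 := Ax x _; rewrite x0 lexx in h1; have {}h1 := h1 isT.
  have h2 : `|g x - g m| <= e * `|x - m|.
    apply: hd => //; rewrite distrC ger0_norm ?subr_ge0 //; rewrite -/m in hx; lra.
  rewrite (ler0_norm (x := x - m)) ?subr_le0 // in h2.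
  have := ler_distD (g x) (g m) (g 0); rewrite [`|g m - g x|]distrC.
  move: h1 h2; set a := `|g x - g 0|; set b := `|g x - g m|; set c := `|g m - g 0|.
  nra.
have mT0 : m = T0.
  apply/le_anti; rewrite mT /= leNgt; apply/negP => mlt.
  have [d d0 hd] := hD m m0 e e0.
  set z := Order.min (m + d / 2) T0.
  have zm : m < z by rewrite lt_min mlt andbT; lra.
  have Az : A z.
    split.
      apply/andP; split; first by apply: le_trans m0 (ltW zm).
      by rewrite ge_min lexx orbT.
    move=> y /andP [y0 yz].
    case: (leP y m) => [ym|mly]; first by apply: Am; rewrite y0 ym.
    have yd : y <= m + d / 2 by apply: le_trans yz _; rewrite ge_min lexx.
    have h1 : `|g m - g 0| <= e * m by apply: Am; rewrite m0 lexx.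
    have h2 : `|g y - g m| <= e * `|y - m|.
      by apply: hd; [lra | rewrite ger0_norm; lra].
    have ym0 : 0 <= y - m by lra.
    rewrite (ger0_norm ym0) in h2.
    have := ler_distD (g m) (g y) (g 0).
    move: h1 h2; set a := `|g m - g 0|; set b := `|g y - g m|; set c := `|g y - g 0|.
    nra.
  have : z <= m by apply: (sup_upper_bound hs); exact: Az.
  lra.
by rewrite -mT0; apply: Am; rewrite m0 lexx.
Qed.
End DQ.

Section Main.
Variables (R : realType) (N : nat) (D : 'I_N -> nat)
  (T : {set {set 'I_N}}) (Rk : {set 'I_N} -> nat)
  (L : (idx D -> R) -> R) (G : (idx D -> R) -> idx D -> R).
Hypothesis hT : mode_tree T.
Hypothesis hG : is_gradient L G.

Local Notation E W := (end_tensor T D Rk W).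

Lemma dphi_gen (W : weights R N) (P : (nat -> R) -> weights R N) (w : nat -> R)
  (m0 : {set 'I_N}) (i0 j0 b : nat) :
  (forall i, AFF (fun x => E (P x) i)) ->
  (forall s, upd W m0 i0 j0 s = P (fun b' => if b' == b then s else w b')) ->
  dphi T D Rk L W m0 i0 j0 =
  \sum_i G (E W) i * (E (P (fun b' => (b' == b)%:R)) i - E (P (fun _ => 0)) i).
Proof.
move=> hA hU.
set A := fun i => E (P (fun b' => if b' == b then 0 else w b')) i.
set B := fun i => E (P (fun b' => (b' == b)%:R)) i - E (P (fun _ => 0)) i.
have eqE : forall s i, E (upd W m0 i0 j0 s) i = A i + s * B i.
  move=> s i; rewrite hU.
  have -> : (fun b' => if b' == b then s else w b') =
      (fun b' => (fun b' => if b' == b then 0 else w b') b' + s * (b' == b)%:R).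
    by apply: funext => b'; case: eqP => _; rewrite ?mulr1 ?mulr0 ?add0r ?addr0.
  have := hA i (fun b' => if b' == b then 0 else w b') (fun b' => (b' == b)%:R) s.
  by rewrite /A /B => <-; rewrite addrC subrK.
have updW : upd W m0 i0 j0 (W m0 i0 j0) = W.
  apply: funext => mu; apply: funext => a; apply: funext => b'.
  by rewrite /upd; case: and3P => // [[/eqP -> /eqP -> /eqP ->]].
rewrite /dphi.
have -> : (fun s => phiH T D Rk L (upd W m0 i0 j0 s)) = (fun s => L (fun i => A i + s * B i)).
  by apply: funext => s; rewrite /phiH; congr L; apply: funext => i; rewrite eqE.
rewrite (GRADLIN _ _ hG).
have -> : (fun i => A i + W m0 i0 j0 * B i) = E W.
  by apply: funext => i; rewrite -eqE updW.
by [].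
Qed.

Lemma S_gen (W : weights R N) (P : (nat -> R) -> weights R N) (w : nat -> R) (M : nat) :
  (forall i, AFF (fun x => E (P x) i)) ->
  (forall x x', (forall b, (b < M)%N -> x b = x' b) -> E (P x) = E (P x')) ->
  P w = W ->
  \sum_(b < M) w b * (\sum_i G (E W) i * (E (P (fun b' => (b' == b)%:R)) i - E (P (fun _ => 0)) i))
  = \sum_i G (E W) i * (E W i - E (P (fun _ => 0)) i).
Proof.
move=> hA hR hP.
under eq_bigr do rewrite mulr_sumr.
rewrite exchange_big /=; apply: eq_bigr => i _.
have -> : E W i - E (P (fun _ => 0)) i =
    \sum_(b < M) w b * (E (P (fun b' => (b' == b)%:R)) i - E (P (fun _ => 0)) i).
  rewrite -(@AFF_trunc _ _ w M (hA i)) -hP; congr (_ - _).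
  by rewrite (hR w (fun b => if (b < M)%N then w b else 0)) // => b ->.
by rewrite mulr_sumr; apply: eq_bigr => b _; rewrite mulrCA.
Qed.

Section Node.
Variables (nu : {set 'I_N}) (r : nat).
Hypothesis nuT : nu \in T.
Hypothesis nu_int : leaf_of nu = None.

Definition Kf (W : weights R N) :=
  \sum_i G (E W) i * (E W i - E (setrow R N W nu r (fun _ => 0)) i).

Lemma Srow (W : weights R N) :
  \sum_(b < rkPa T D Rk nu) W nu r b * dphi T D Rk L W nu r b = Kf W.
Proof.
have hA : forall i, AFF (fun x => E (setrow R N W nu r x) i).
  move=> i; apply: (@AFF_gen R N T D Rk hT W (setrow R N W nu r) nu nuT).
    by move=> x mu a b /negbTE h; rewrite /setrow h.
  move=> a b; rewrite /setrow eqxx /=; case: (a == r); [exact: AFF_coord | exact: AFF_const].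
have hD : forall b : nat, dphi T D Rk L W nu r b =
   \sum_i G (E W) i * (E (setrow R N W nu r (fun b' => (b' == b)%:R)) i -
                        E (setrow R N W nu r (fun _ => 0)) i).
  move=> b; apply: (dphi_gen W (setrow R N W nu r) (fun b => W nu r b)) => // s.
  apply: funext => mu; apply: funext => a; apply: funext => b'.
  rewrite /upd /setrow.
  case: (eqVneq mu nu) => [->|_] //=; case: (eqVneq a r) => [->|_] //=.
under eq_bigr do rewrite hD.
rewrite (S_gen W (setrow R N W nu r) (fun b => W nu r b)) //.
- move=> x x' hx; apply: funext => i.
  rewrite /end_tensor; apply: (RANGE_row _ _ _ _ _ hT W nu r _ _ hx) => e; rewrite -e /rkPa eqxx //.
- apply: funext => mu; apply: funext => a; apply: funext => b'.
  by rewrite /setrow; case: andP => // [[/eqP -> /eqP ->]].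
Qed.

Lemma Scol (W : weights R N) c : c \in children T nu ->
  \sum_(a < rk D Rk c) W c a r * dphi T D Rk L W c a r = Kf W.
Proof.
move=> hc; have [cT _ cnu _] := childP hc.
have hA : forall i, AFF (fun x => E (setcol R N W c r x) i).
  move=> i; apply: (@AFF_gen R N T D Rk hT W (setcol R N W c r) c cT).
    by move=> x mu a b /negbTE h; rewrite /setcol h.
  move=> a b; rewrite /setcol eqxx /=; case: (b == r); [exact: AFF_coord | exact: AFF_const].
have hD : forall a : nat, dphi T D Rk L W c a r =
   \sum_i G (E W) i * (E (setcol R N W c r (fun a' => (a' == a)%:R)) i -
                        E (setcol R N W c r (fun _ => 0)) i).
  move=> a; apply: (dphi_gen W (setcol R N W c r) (fun a => W c a r)) => // s.
  apply: funext => mu; apply: funext => a'; apply: funext => b'.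
  rewrite /upd /setcol.
  case: (eqVneq mu c) => [->|_] //=; case: (eqVneq b' r) => [->|_] //=.
    by rewrite andbT.
  by rewrite andbF.
under eq_bigr do rewrite hD.
rewrite (S_gen W (setcol R N W c r) (fun a => W c a r)) //.
- rewrite /Kf; apply: eq_bigr => i _; congr (_ * (_ - _)).
  symmetry; apply: (ZERO _ _ _ _ _ hT W nu c r nu_int hc).
  apply/orP; left; apply/eqP => e.
  by move: cnu; rewrite -e properE subsetT andbF.
- move=> x x' hx; apply: funext => i.
  by rewrite /end_tensor; apply: (RANGE_col _ _ _ _ _ _ _ _ _ _ hx).
- apply: funext => mu; apply: funext => a; apply: funext => b'.
  by rewrite /setcol; case: andP => // [[/eqP -> /eqP ->]].
Qed.

End Node.
End Main.

Theorem lemma2 (R : realType) (N : nat) (D : 'I_N -> nat)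
  (T : {set {set 'I_N}}) (Rk : {set 'I_N} -> nat)
  (L : (idx D -> R) -> R) (Wt : R -> weights R N) :
  mode_tree T ->
  differentiableT L ->
  locally_smooth L ->
  gradient_flow T D Rk L Wt ->
  forall nu : {set 'I_N}, interior_node T nu ->
  forall r : nat, (r < rk D Rk nu)%N ->
  forall w w' : option {set 'I_N}, in_LC T nu w -> in_LC T nu w' ->
  forall t : R, 0 <= t ->
    LC_sqnorm T D Rk (Wt t) nu r w - LC_sqnorm T D Rk (Wt t) nu r w'
    = LC_sqnorm T D Rk (Wt 0) nu r w - LC_sqnorm T D Rk (Wt 0) nu r w'.
Proof.
move=> hT [G hG] _ hflow nu /andP [nuT /eqP nu_int] r hr.
have flow_LC : forall w, in_LC T nu w -> forall t, 0 <= t ->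
    deriv_nonneg (fun s => LC_sqnorm T D Rk (Wt s) nu r w) t
      (- (2 * Kf R N D T Rk G nu r (Wt t))).
  case=> [c|] /= hw t t0.
    have [cT _ _ _] := childP hw.
    have := @dq_sum R (rk D Rk c) (fun j s => Wt s c j r ^+ 2)
      (fun j => (Wt t c j r + Wt t c j r) * (- dphi T D Rk L (Wt t) c j r)) t.
    have -> : - (2 * Kf R N D T Rk G nu r (Wt t)) =
       \sum_(j < rk D Rk c) (Wt t c j r + Wt t c j r) * (- dphi T D Rk L (Wt t) c j r).
      rewrite -(Scol R N D T Rk L G hT hG nu r nu_int (Wt t) c hw) mulr_sumr -sumrN.
      by apply: eq_bigr => j _; ring.
    apply=> j; apply: dq_sq; apply: hflow => //.
    by rewrite (rkPa_child hT D Rk hw).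
  have := @dq_sum R (rkPa T D Rk nu) (fun j s => Wt s nu r j ^+ 2)
    (fun j => (Wt t nu r j + Wt t nu r j) * (- dphi T D Rk L (Wt t) nu r j)) t.
  have -> : - (2 * Kf R N D T Rk G nu r (Wt t)) =
     \sum_(j < rkPa T D Rk nu) (Wt t nu r j + Wt t nu r j) * (- dphi T D Rk L (Wt t) nu r j).
    rewrite -(Srow R N D T Rk L G hT hG nu r nuT (Wt t)) mulr_sumr -sumrN.
    by apply: eq_bigr => j _; ring.
  by apply=> j; apply: dq_sq; apply: hflow.
move=> w w' hw hw' t t0.
pose g := fun s => LC_sqnorm T D Rk (Wt s) nu r w - LC_sqnorm T D Rk (Wt s) nu r w'.
have hg : forall t, 0 <= t -> deriv_nonneg g t 0.
  move=> t1 t10; rewrite -(subrr (- (2 * Kf R N D T Rk G nu r (Wt t1)))).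
  by apply: dq_sub; apply: flow_LC.
exact: (@DZ_const R g (fun t1 t10 => @dq_DZ R g t1 (hg t1 t10)) t t0).
Qed.
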